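(* Let $d\geq 2$ and let $\omega_{2d}=\{\mathbf x_1,\ldots,\mathbf x_{2d}\}$ be an antipodal configuration of $2d$ points on the unit sphere $S^{d-1}\subset\mathbb R^d$. Then $$\eta(\omega_{2d},S^{d-1}):=\min_{\mathbf x\in S^{d-1}}\max_{1\le i\le 2d}\mathbf x\cdot\mathbf x_i\leq \frac{1}{\sqrt d}.$$ Equality holds if and only if $\omega_{2d}$ is the set of vertices of a regular cross-polytope inscribed in $S^{d-1}$, i.e. $\omega_{2d}=\{\pm\mathbf a_1,\ldots,\pm\mathbf a_d\}$ for some orthonormal basis $\{\mathbf a_1,\ldots,\mathbf a_d\}$ of $\mathbb R^d$.
   Context: $S^{d-1}=\{\mathbf x\in\mathbb R^d:|\mathbf x|=1\}$. A configuration is a list of points (points may coincide). A configuration on $S^{d-1}$ is antipodal if together with a point $\mathbf x$ it contains $-\mathbf x$. *)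

(* Defs.v *)
From HB Require Import structures.
From mathcomp Require Import all_boot all_order all_algebra.
From mathcomp Require Import boolp classical_sets reals.
Set Implicit Arguments. Unset Strict Implicit. Unset Printing Implicit Defensive.
Import Order.TTheory GRing.Theory Num.Theory.
Local Open Scope ring_scope.
Local Open Scope classical_set_scope.

Definition dotp (R : realType) (d : nat) (u v : 'rV[R]_d) : R := (u *m v^T) 0 0.

Definition sphere (R : realType) (d : nat) : set 'rV[R]_d :=
  [set x | dotp x x = 1].

(* a configuration is a list of points (repetitions allowed) *)
Definition on_sphere (R : realType) (d : nat) (s : seq 'rV[R]_d) : Prop :=
  forall v, v \in s -> dotp v v = 1.

Definition antipodal (R : realType) (d : nat) (s : seq 'rV[R]_d) : Prop :=
  forall v, v \in s -> - v \in s.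

Definition maxdot (R : realType) (d : nat) (s : seq 'rV[R]_d) (x : 'rV[R]_d) : R :=
  \big[Num.max/dotp x (head 0 s)]_(v <- s) dotp x v.

Definition eta_cov (R : realType) (d : nat) (s : seq 'rV[R]_d) : R :=
  inf [set maxdot s x | x in @sphere R d].

Definition orthonormal_basis (R : realType) (d : nat) (a : 'I_d -> 'rV[R]_d) : Prop :=
  forall i j, dotp (a i) (a j) = (i == j)%:R.

(* Main.v *)
Require Import Defs.
From HB Require Import structures.
From mathcomp Require Import all_boot all_order all_algebra.
From mathcomp Require Import boolp classical_sets reals.
From mathcomp Require Import ring lra.
Set Implicit Arguments. Unset Strict Implicit.
Import Order.TTheory GRing.Theory Num.Theory.
Local Open Scope ring_scope.

Section Dot.
Variables (R : realType) (d : nat).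
Implicit Types (u v w : 'rV[R]_d).

Lemma dotpE u v : dotp u v = \sum_k u 0 k * v 0 k.
Proof. by rewrite /dotp !mxE; apply: eq_bigr => k _; rewrite mxE. Qed.

Lemma dotpC u v : dotp u v = dotp v u.
Proof. by rewrite !dotpE; apply: eq_bigr => k _; rewrite mulrC. Qed.

Lemma dotpDl u v w : dotp (u + v) w = dotp u w + dotp v w.
Proof. by rewrite !dotpE -big_split; apply: eq_bigr => k _; rewrite mxE mulrDl. Qed.

Lemma dotpZl a u w : dotp (a *: u) w = a * dotp u w.
Proof. by rewrite !dotpE mulr_sumr; apply: eq_bigr => k _; rewrite mxE mulrA. Qed.

Lemma dotpNl u w : dotp (- u) w = - dotp u w.
Proof. by rewrite -scaleN1r dotpZl mulN1r. Qed.

Lemma dotpDr u v w : dotp w (u + v) = dotp w u + dotp w v.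
Proof. by rewrite dotpC dotpDl !(dotpC w). Qed.

Lemma dotpZr a u w : dotp w (a *: u) = a * dotp w u.
Proof. by rewrite dotpC dotpZl dotpC. Qed.

Lemma dotpNr u w : dotp w (- u) = - dotp w u.
Proof. by rewrite dotpC dotpNl dotpC. Qed.

Lemma dotpBr u v w : dotp w (u - v) = dotp w u - dotp w v.
Proof. by rewrite dotpDr dotpNr. Qed.

Lemma dotpBl u v w : dotp (u - v) w = dotp u w - dotp v w.
Proof. by rewrite dotpDl dotpNl. Qed.

Lemma dotp_ge0 u : 0 <= dotp u u.
Proof. by rewrite dotpE sumr_ge0 // => k _; rewrite -expr2 sqr_ge0. Qed.

Lemma dotp_eq0 u : dotp u u = 0 -> u = 0.
Proof.
rewrite dotpE => H; apply/rowP => k; rewrite mxE.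
have := psumr_eq0P (P := predT) (fun i _ => sqr_ge0 (u 0 i)).
rewrite (eq_bigr (fun i => u 0 i * u 0 i)) ?H; last by move=> i _; rewrite expr2.
by move=> /(_ erefl k erefl) /eqP; rewrite sqrf_eq0 => /eqP.
Qed.

Lemma dotp_row m n (A : 'M[R]_(m, d)) (B : 'M[R]_(n, d)) i j :
  dotp (row i A) (row j B) = (A *m B^T) i j.
Proof. by rewrite /dotp !mxE; apply: eq_bigr => k _; rewrite !mxE. Qed.

Lemma dotp_sumr n (F : 'I_n -> 'rV[R]_d) u :
  dotp u (\sum_i F i) = \sum_i dotp u (F i).
Proof.
rewrite dotpE; under eq_bigr do rewrite summxE mulr_sumr.
by rewrite exchange_big; apply: eq_bigr => i _; rewrite dotpE.
Qed.

Lemma cs_unit u v : dotp u u = 1 -> dotp u v ^+ 2 <= dotp v v.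
Proof.
move=> hu; have := dotp_ge0 (v - dotp u v *: u).
rewrite dotpBl !dotpBr !dotpZl !dotpZr hu (dotpC v u).
rewrite mulr1 subrr subr0 subr_ge0.
by rewrite expr2.
Qed.


Lemma dotp_sq u v : dotp (u + v) (u + v) = dotp u u + 2 * dotp u v + dotp v v.
Proof. rewrite !dotpDl !dotpDr (dotpC v u); ring. Qed.

Lemma greedy n (z : 'I_n -> 'rV[R]_d) : exists e : 'I_n -> R,
  (forall i, e i = 1 \/ e i = -1) /\
  \sum_i dotp (z i) (z i) <= dotp (\sum_i e i *: z i) (\sum_i e i *: z i).
Proof.
elim: n z => [|n IH] z.
  by exists (fun _ => 1); split; [left | rewrite !big_ord0 dotpE big1 // => k _; rewrite mxE mul0r].
have [e' [he' hle]] := IH (fun i => z (lift ord0 i)).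
set u := \sum_i e' i *: z (lift ord0 i) in hle.
pose sg : R := if 0 <= dotp (z ord0) u then 1 else -1.
exists (fun i => oapp e' sg (unlift ord0 i)); split.
  move=> i; case: (unlift ord0 i) => [j|] /=; first exact: he'.
  by rewrite /sg; case: ifP; [left|right].
rewrite !big_ord_recl /= unlift_none /=.
rewrite (eq_bigr (fun i => e' i *: z (lift ord0 i))); last by move=> i _; rewrite liftK.
rewrite -/u dotp_sq dotpZl dotpZr.
have sg2 : sg * sg = 1 by rewrite /sg; case: ifP => _; rewrite ?mulr1 ?mulrNN ?mulr1.
have sgp : 0 <= sg * dotp (z ord0) u.
  rewrite /sg; case: ifP => h; first by rewrite mul1r.
  by rewrite mulN1r oppr_ge0 ltW // ltNge h.
rewrite mulrA sg2 mul1r -addrA lerD2l; apply: le_trans hle _.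
by rewrite dotpZl lerDr mulr_ge0.
Qed.

Lemma normalize w : 0 < dotp w w ->
  let x := (Num.sqrt (dotp w w))^-1 *: w in
  dotp x x = 1 /\ forall u, dotp x u = dotp w u / Num.sqrt (dotp w w).
Proof.
move=> hw x; split; last by move=> u; rewrite /x dotpZl mulrC.
rewrite /x dotpZl dotpZr mulrA -expr2 exprVn sqr_sqrtr ?ltW //.
by rewrite mulVf // gt_eqF.
Qed.
End Dot.

Section Key.
Variables (R : realType) (d : nat).

Lemma inv_sqrt_le (a b : R) : 0 < a -> a <= b -> 1 / Num.sqrt b <= 1 / Num.sqrt a.
Proof.
move=> a0 ab; have b0 : 0 < b by apply: lt_le_trans ab.
by rewrite !div1r lef_pV2 ?posrE ?sqrtr_gt0 // ler_sqrt // ltW.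
Qed.

Lemma inv_sqrt_lt (a b : R) : 0 < a -> a < b -> 1 / Num.sqrt b < 1 / Num.sqrt a.
Proof.
move=> a0 ab; have b0 : 0 < b by apply: lt_trans ab.
by rewrite !div1r ltf_pV2 ?posrE ?sqrtr_gt0 // ltr_sqrt.
Qed.

Lemma key (Y : 'M[R]_d) : (0 < d)%N -> (forall i, dotp (row i Y) (row i Y) = 1) ->
  exists x, dotp x x = 1 /\ (forall i, `|dotp x (row i Y)| <= 1 / Num.sqrt d%:R) /\
   (Y *m Y^T != 1%:M -> forall i, `|dotp x (row i Y)| < 1 / Num.sqrt d%:R).
Proof.
move=> d0 hY.
have sd0 : 0 < 1 / Num.sqrt (d%:R : R) by rewrite div1r invr_gt0 sqrtr_gt0 ltr0n.
case: (boolP (\det Y^T == 0)) => [/det0P [v v0 hv] | hdet].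
  have pv : 0 < dotp v v.
    by rewrite lt_def dotp_ge0 andbT; apply: contra v0 => /eqP /dotp_eq0 ->.
  have [hx hxu] := normalize pv.
  set x := _ *: v in hx hxu; exists x; split => //.
  have z i : dotp x (row i Y) = 0.
    rewrite hxu; have -> : dotp v (row i Y) = (v *m Y^T) 0 i.
      by rewrite /dotp !mxE; apply: eq_bigr => k _; rewrite !mxE.
    by rewrite hv mxE mul0r.
  by split=> [i|_ i]; rewrite z normr0 // ltW.
have hU : Y \in unitmx by rewrite -unitmx_tr unitmxE unitfE.
set Z := invmx Y; have hYZ : Y *m Z = 1%:M by rewrite mulmxV.
pose z i := row i Z^T.
have hyz i j : dotp (row i Y) (z j) = (i == j)%:R.
  by rewrite /z dotp_row trmxK hYZ mxE.
have hz i : 1 <= dotp (z i) (z i).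
  by have := cs_unit (z i) (hY i); rewrite hyz eqxx expr1n.
have [e [he hle]] := greedy z.
set w := \sum_i e i *: z i in hle.
have hS : d%:R <= \sum_i dotp (z i) (z i).
  apply: le_trans (ler_sum _ (fun i _ => hz i)).
  by rewrite sumr_const card_ord.
have hd : (0 : R) < d%:R by rewrite ltr0n.
have pw : 0 < dotp w w by apply: lt_le_trans hle; apply: lt_le_trans hS.
have [hx hxu] := normalize pw.
set x := _ *: w in hx hxu; exists x; split => //.
have ex i : `|dotp x (row i Y)| = 1 / Num.sqrt (dotp w w).
  rewrite hxu dotpC /w dotp_sumr (bigD1 i) //= big1 => [|j hj].
    rewrite dotpZr hyz eqxx mulr1 addr0 normrM normfV.
    by rewrite [`|Num.sqrt _|]ger0_norm ?sqrtr_ge0 //; case: (he i) => ->; rewrite ?normrN normr1.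
  by rewrite dotpZr hyz eq_sym (negbTE hj) mulr0.
split=> [i|hne i]; rewrite ex.
  by apply: inv_sqrt_le => //; apply: le_trans hle.
apply: inv_sqrt_lt => //; apply: lt_le_trans hle.
rewrite ltNge; apply: contra hne => hSd.
have hge j : (fun j => true) j -> 0 <= dotp (z j) (z j) - 1 by move=> _; rewrite subr_ge0.
have hsum : \sum_(j | true) (dotp (z j) (z j) - 1) = 0.
  apply/eqP; rewrite eq_le sumrB sumr_const card_ord subr_le0 hSd /=.
  by rewrite subr_ge0.
have h1 k : dotp (z k) (z k) = 1.
  by apply/subr0_eq; apply: (psumr_eq0P hge hsum).
have hzy k : z k = row k Y.
  apply/subr0_eq/dotp_eq0; rewrite dotpBl !dotpBr h1 hY (dotpC (z k)) hyz eqxx.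
  by rewrite mulr1n !subrr.
have -> : Y^T = Z by rewrite -[Z]trmxK; congr trmx; apply/row_matrixP => k; rewrite -hzy.
by rewrite hYZ.
Qed.
End Key.

Section Rep.
Variables (R : realType) (d : nat).
Implicit Types (l : seq 'rV[R]_d) (u v w : 'rV[R]_d).

Fixpoint rep l : seq 'rV[R]_d :=
  if l is v :: l' then
    (if (v \in rep l') || (- v \in rep l') then rep l' else v :: rep l')
  else [::].

Lemma rep_sub l : {subset rep l <= l}.
Proof.
elim: l => [//|v l IH] /= u; case: ifP => _.
  by move=> /IH; rewrite inE orbC => ->.
by rewrite !inE => /orP [->//|/IH ->]; rewrite orbT.
Qed.

Lemma rep_cover l v : v \in l -> exists2 u, u \in rep l & (v = u \/ v = - u).
Proof.
elim: l => [//|x l IH] /=; rewrite inE => /orP [/eqP ->|/IH [u hu e]].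
  case: ifP => [/orP [h|h]|_].
  - by exists x => //; left.
  - by exists (- x) => //; right; rewrite opprK.
  - by exists x; rewrite ?mem_head //; left.
by case: ifP => _; exists u => //; rewrite inE hu orbT.
Qed.

Lemma rep_uniq l : uniq (rep l).
Proof.
elim: l => [//|v l IH] /=; case: ifP => // /negbT; rewrite negb_or => /andP [h _].
by rewrite /= h IH.
Qed.

Lemma rep_noanti l : (forall v, v \in l -> v != 0) ->
  forall u w, u \in rep l -> w \in rep l -> u != - w.
Proof.
elim: l => [//|x l IH] /= hnz.
have IH' : forall u w, u \in rep l -> w \in rep l -> u != - w.
  by apply: IH => v hv; apply: hnz; rewrite inE hv orbT.
case: ifP => [_|/negbT]; first exact: IH'.
rewrite negb_or => /andP [h1 h2] u w; rewrite !inE.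
have nx : x != - x.
  apply: contra (hnz x (mem_head _ _)).
  by rewrite -addr_eq0 -mulr2n -scaler_nat scaler_eq0 pnatr_eq0.
move=> /orP [/eqP ->|hu] /orP [/eqP ->|hw].
- exact: nx.
- by apply: contra h2 => /eqP ->; rewrite opprK.
- by apply: contra h2 => /eqP <-.
- exact: IH'.
Qed.

Lemma rep_size l : (forall v, v \in l -> v != 0) -> (forall v, v \in l -> - v \in l) ->
  (2 * size (rep l) <= size l)%N.
Proof.
move=> hnz hanti.
have -> : (2 * size (rep l) = size (rep l ++ map -%R (rep l)))%N.
  by rewrite size_cat size_map mul2n addnn.
apply: uniq_leq_size.
  rewrite cat_uniq rep_uniq (map_inj_uniq oppr_inj) rep_uniq andbT /=.
  apply/hasPn => x /mapP [w hw ->]; apply/negP => hx.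
  by have := rep_noanti hnz hx hw; rewrite eqxx.
move=> x; rewrite mem_cat => /orP [/rep_sub //|/mapP [w /rep_sub hw ->]].
exact: hanti.
Qed.

End Rep.

Section Main.
Variables (R : realType) (d : nat).
Implicit Types (s : seq 'rV[R]_d) (x v : 'rV[R]_d).

Lemma bigmax_P (P : R -> Prop) (a : R) (t : seq 'rV[R]_d) (F : 'rV[R]_d -> R) :
  P a -> (forall v, v \in t -> P (F v)) -> P (\big[Num.max/a]_(v <- t) F v).
Proof.
move=> Pa; elim: t => [|y t IH] H; first by rewrite big_nil.
rewrite big_cons; have Py : P (F y) by apply: H; rewrite mem_head.
have Pt : P (\big[Num.max/a]_(v <- t) F v).
  by apply: IH => v hv; apply: H; rewrite inE hv orbT.
by case: leP.
Qed.

Lemma bigmax_ge (a : R) (t : seq 'rV[R]_d) (F : 'rV[R]_d -> R) v :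
  v \in t -> F v <= \big[Num.max/a]_(y <- t) F y.
Proof.
elim: t => [//|y t IH]; rewrite inE big_cons le_max => /orP [/eqP ->|/IH ->].
  by rewrite lexx.
by rewrite orbT.
Qed.

Lemma maxdot_P (P : R -> Prop) s x : s != [::] ->
  (forall v, v \in s -> P (dotp x v)) -> P (maxdot s x).
Proof.
move=> s0 H; apply: bigmax_P => //; apply: H.
by case: s s0 => //= y t _; rewrite mem_head.
Qed.

Lemma maxdot_ge s x v : v \in s -> dotp x v <= maxdot s x.
Proof. exact: bigmax_ge. Qed.

Lemma maxdot_ge0 s x : s != [::] -> antipodal s -> 0 <= maxdot s x.
Proof.
case: s => // v t _ ha.
have h1 := maxdot_ge x (mem_head v t).
have h2 := maxdot_ge x (ha v (mem_head v t)).
rewrite dotpNr in h2.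
case: (leP 0 (dotp x v)) => h; first by apply: le_trans h1.
by apply: le_trans h2; rewrite oppr_ge0 ltW.
Qed.

Lemma eta_le s x : s != [::] -> antipodal s -> dotp x x = 1 -> eta_cov s <= maxdot s x.
Proof.
move=> s0 ha hx; have hl : has_lbound [set maxdot s y | y in @sphere R d].
  by exists 0 => _ [y _ <-]; apply: maxdot_ge0.
by apply: ge_inf hl _ _; exists x.
Qed.

Lemma eta_ge s c (x0 : 'rV[R]_d) : dotp x0 x0 = 1 ->
  (forall x, dotp x x = 1 -> c <= maxdot s x) -> c <= eta_cov s.
Proof.
move=> h0 H; apply: lb_le_inf; first by exists (maxdot s x0), x0.
by move=> _ [y hy <-]; apply: H.
Qed.

End Main.

Theorem theorem2p2 (R : realType) (d : nat) (s : seq 'rV[R]_d) :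
  (2 <= d)%N -> size s = (2 * d)%N -> on_sphere s -> antipodal s ->
  eta_cov s <= 1 / Num.sqrt (d%:R) /\
  (eta_cov s = 1 / Num.sqrt (d%:R) <->
   exists a : 'I_d -> 'rV[R]_d, orthonormal_basis a /\
     forall v, v \in s <-> exists i, v = a i \/ v = - a i).
Proof.
move=> d2 hsz hsph hanti.
have d0 : (0 < d)%N by apply: leq_trans d2.
set c := 1 / Num.sqrt (d%:R : R).
have s0 : s != [::] by rewrite -size_eq0 hsz muln_eq0 /= -lt0n d0.
set w0 := head 0 s.
have hw0 : w0 \in s by rewrite /w0; case: (s) s0 => //= y t _; rewrite mem_head.
have hnz v : v \in s -> v != 0.
  move=> /hsph hv; apply/eqP => h; move: hv; rewrite h dotpE big1 => [/eqP|k _].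
    by rewrite eq_sym oner_eq0.
  by rewrite mxE mul0r.
set r := rep s.
have hr : (size r <= d)%N.
  by rewrite -(@leq_pmul2l 2) // -hsz; apply: rep_size.
pose Y := \matrix_(i < d, k < d) (nth w0 r i) 0 k.
have hrow i : row i Y = nth w0 r i by apply/rowP => k; rewrite !mxE.
have hYin i : row i Y \in s.
  rewrite hrow; case: (ltnP i (size r)) => h; first exact/rep_sub/mem_nth.
  by rewrite nth_default.
have hcov v : v \in s -> exists i, v = row i Y \/ v = - row i Y.
  move=> /rep_cover [u hu e]; have hi : (index u r < d)%N.
    by apply: leq_trans hr; rewrite index_mem.
  by exists (Ordinal hi); rewrite hrow /= nth_index.
have hY1 i : dotp (row i Y) (row i Y) = 1 by apply: hsph.
have [x [hx [hle hlt]]] := key d0 hY1.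
have hbound (P : R -> Prop) : (forall i, P `|dotp x (row i Y)|) ->
    (forall a b, P b -> a <= b -> P a) -> P (maxdot s x).
  move=> HP Hmono; apply: maxdot_P => // v /hcov [i [->|->]].
    by apply: Hmono (HP i) _; apply: ler_norm.
  by apply: Hmono (HP i) _; rewrite dotpNr -normrN ler_norm.
have part1 : eta_cov s <= c.
  apply: le_trans (eta_le s0 hanti hx) _.
  by apply: (hbound (fun t => t <= c)) => // a b hb hab; apply: le_trans hb.
split => //; split.
  move=> heq; case: (eqVneq (Y *m Y^T) 1%:M) => hYY; last first.
    have : maxdot s x < c.
      by apply: (hbound (fun t => t < c)) => [i|a b hb hab]; [apply: hlt | apply: le_lt_trans hb].
    by rewrite -heq ltNge eta_le.
  exists (fun i => row i Y); split.
    by move=> i j; rewrite dotp_row hYY mxE.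
  move=> v; split; first exact: hcov.
  by move=> [i [->|->]] //; apply: hanti.
move=> [a [hon hs]]; apply/le_anti; rewrite part1 /=.
apply: (eta_ge hx) => y hy.
pose A := \matrix_(i < d, k < d) (a i) 0 k.
have hAr i : row i A = a i by apply/rowP => k; rewrite !mxE.
have hAA : A *m A^T = 1%:M.
  by apply/matrixP => i j; rewrite -dotp_row !hAr hon mxE.
have hAA' := mulmx1C hAA.
have hsum : \sum_i dotp y (a i) ^+ 2 = 1.
  have -> : 1 = dotp (y *m A^T) (y *m A^T).
    by rewrite -hy /dotp trmx_mul trmxK mulmxA -(mulmxA y) hAA' mulmx1.
  rewrite dotpE; apply: eq_bigr => k _; rewrite expr2.
  suff -> : (y *m A^T) 0 k = dotp y (a k) by [].
  by rewrite dotpE mxE; apply: eq_bigr => j _; rewrite !mxE.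
have [i hi] : exists i, 1 / d%:R <= dotp y (a i) ^+ 2.
  apply/not_existsP => hn.
  have : \sum_(i < d) dotp y (a i) ^+ 2 < \sum_(i < d) (1 / d%:R : R).
    apply: ltr_sum => [|i _]; first by apply/hasP; exists (Ordinal d0); rewrite ?mem_index_enum.
    by rewrite ltNge; apply/negP => h; apply: (hn i).
  by rewrite hsum sumr_const card_ord -[(1 / d%:R) *+ d]mulr_natr mul1r mulVf ?ltxx // pnatr_eq0 -lt0n.
have hci : c <= `|dotp y (a i)|.
  rewrite -ler_sqr ?nnegrE ?normr_ge0 ?divr_ge0 ?sqrtr_ge0 //.
  by rewrite real_normK ?num_real // expr_div_n expr1n sqr_sqrtr.
pose v := if 0 <= dotp y (a i) then a i else - a i.
have hv : v \in s by apply/hs; exists i; rewrite /v; case: ifP; [left|right].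
apply: le_trans (maxdot_ge y hv); apply: le_trans hci _.
rewrite /v; case: ifP => h; first by rewrite ger0_norm.
by rewrite dotpNr ler0_norm // ltW // ltNge h.
Qed.
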